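(* Let $n\ge 2$, $1\le d\le n-1$, and consider a network of the type below on nodes $\{1,\dots,n\}$ in which node $i$ has degree $d$. Then $$\Delta_i\le \frac{\lambda_s}{\lambda}\,\frac{n}{d+1}\left(1+\sum_{d_2=0}^{d-1}\prod_{d_1=0}^{d_2}\frac{d-d_1}{d+1}\right),$$ with equality when the $d$ neighbours of $i$ have degree $1$ (i.e., the only links incident to them are their links to $i$).
   Context: Version-age model. A gossip network on a finite node set $\mathcal N$ is specified by source rates $\lambda_{0j}>0$ and gossip rates $\lambda_{ij}\ge 0$ ($i\neq j$; rate at which $i$ sends to $j$); $\lambda_s>0$ is the source's update rate. For nonempty $S\subseteq\mathcal N$ let $N(S)=\{i\in\mathcal N\setminus S:\ \sum_{j\in S}\lambda_{ij}>0\}$ and define $$\Delta_S=\frac{\lambda_s+\sum_{i\in N(S)}\big(\sum_{j\in S}\lambda_{ij}\big)\Delta_{S\cup\{i\}}}{\sum_{j\in S}\lambda_{0j}+\sum_{i\in N(S)}\sum_{j\in S}\lambda_{ij}}$$ (well defined by downward induction on $|S|$); $\Delta_i=\Delta_{\{i\}}$. Networks with uniform link rate: node set $\{1,\dots,n\}$, $\lambda_{0j}=\lambda/n$ for all $j$, and a set of links (unordered pairs of distinct nodes); for each link $\{a,b\}$, $\lambda_{ab}=\lambda_{ba}=\lambda/n$, and $\lambda_{ab}=0$ if $\{a,b\}$ is not a link. The degree of a node is the number of links incident to it. *)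

(* Defs.v *)
From mathcomp Require Import all_boot all_order all_algebra.
Set Implicit Arguments. Unset Strict Implicit. Unset Printing Implicit Defensive.
Import Order.TTheory GRing.Theory Num.Theory.
Local Open Scope ring_scope.

Section VersionAge.
Variables (R : realFieldType) (n : nat).

(* A general gossip network on nodes 'I_n :
   lam0 j = lambda_{0j} (source -> j), lam i j = lambda_{ij} (i -> j),
   lams = lambda_s. *)

Definition rate_into (lam : 'I_n -> 'I_n -> R) (S : {set 'I_n}) (i : 'I_n) : R :=
  \sum_(j in S) lam i j.

Definition nbrs (lam : 'I_n -> 'I_n -> R) (S : {set 'I_n}) : {set 'I_n} :=
  [set i | (i \notin S) && (0 < rate_into lam S i)].

Fixpoint Delta_fuel (lams : R) (lam0 : 'I_n -> R) (lam : 'I_n -> 'I_n -> R)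
    (m : nat) (S : {set 'I_n}) : R :=
  match m with
  | 0%N => 0
  | m'.+1 =>
      (lams + \sum_(i in nbrs lam S) rate_into lam S i
                    * Delta_fuel lams lam0 lam m' (i |: S))
      / (\sum_(j in S) lam0 j + \sum_(i in nbrs lam S) rate_into lam S i)
  end.

(* Delta_S, for nonempty S (fuel n - |S| + 1 suffices: downward induction
   on |S|). *)
Definition DeltaS lams lam0 lam (S : {set 'I_n}) : R :=
  Delta_fuel lams lam0 lam (n - #|S|).+1 S.

Definition Delta_node lams lam0 lam (i : 'I_n) : R := DeltaS lams lam0 lam [set i].

Definition unif_lam0 (lam : R) : 'I_n -> R := fun _ => lam / n%:R.
Definition unif_lam (lam : R) (e : rel 'I_n) : 'I_n -> 'I_n -> R :=
  fun a b => if e a b then lam / n%:R else 0.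

Definition degree (e : rel 'I_n) (i : 'I_n) : nat := #|[set j | e i j]|.

End VersionAge.

(* Main.v *)
Require Import Defs.
From mathcomp Require Import all_boot all_order all_algebra.
From mathcomp Require Import ring lra.
Import Order.TTheory GRing.Theory Num.Theory.
Local Open Scope ring_scope.
Set Implicit Arguments. Unset Strict Implicit.

Section G.
Variables (R : realFieldType) (lams a : R).
Hypotheses (hl : 0 < lams) (ha : 0 < a).

Lemma div_le (x x' z z' : R) : 0 <= x -> x <= x' -> 0 < z -> z <= z' -> x / z' <= x' / z.
Proof.
move=> hx hxx hz hzz.
have hz' : 0 < z' by apply: lt_le_trans hzz.
apply: (@le_trans _ _ (x / z)).
  apply: ler_wpM2l => //. by rewrite lef_pV2 // posrE.
apply: ler_wpM2r => //. by rewrite invr_ge0 ltW.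
Qed.

Fixpoint G (m u : nat) : R :=
  if u is u'.+1 then (lams + u%:R * a * G m.+1 u') / ((m + u)%:R * a)
  else lams / (m%:R * a).

Lemma G_ge0 m u : 0 <= G m u.
Proof.
elim: u m => [|u IH] m /=.
  by apply: divr_ge0; [exact: ltW| apply: mulr_ge0; [apply: ler0n| exact: ltW]].
apply: divr_ge0; last by apply: mulr_ge0; [apply: ler0n| exact: ltW].
apply: addr_ge0; first exact: ltW.
by apply: mulr_ge0; [apply: mulr_ge0; [apply: ler0n| exact: ltW]| apply: IH].
Qed.

Lemma cK m : (0 < m)%N -> lams / (m%:R * a) * (m%:R * a) = lams.
Proof.
move=> hm; rewrite divfK //; apply: lt0r_neq0; apply: mulr_gt0 => //.
by rewrite ltr0n.
Qed.

Lemma inv_le m : (0 < m)%N -> lams / (m.+1%:R * a) <= lams / (m%:R * a).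
Proof.
move=> hm.
have hp : 0 < m.+1%:R * a by apply: mulr_gt0 => //; rewrite ltr0n.
rewrite ler_pdivrMr //.
have := cK hm. have : (m%:R : R) >= 1 by rewrite ler1n.
rewrite -addn1 natrD.
have : 0 <= lams / (m%:R * a) by exact: (G_ge0 m 0).
set c := lams / _. move=> h0 h1 h2. nra.
Qed.

Lemma G_le m u : (0 < m)%N -> G m u <= lams / (m%:R * a).
Proof.
elim: u m => [|u IH] m hm /=; first by [].
have hg := IH m.+1 isT. have hi := inv_le hm.
have hp : 0 < (m + u.+1)%:R * a by apply: mulr_gt0 => //; rewrite ltr0n addn_gt0 hm.
rewrite ler_pdivrMr // natrD.
have hgc : G m.+1 u <= lams / (m%:R * a) by apply: le_trans hg hi.
have h3 : 0 <= u.+1%:R * a * (lams / (m%:R * a) - G m.+1 u).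
  by apply: mulr_ge0; [apply: mulr_ge0; [apply: ler0n| exact: ltW]| rewrite subr_ge0].
have := cK hm.
move: h3 hgc; set c := lams / (m%:R * a); set g := G m.+1 u.
move=> h3 hgc h1. 
have -> : c * ((m%:R + u.+1%:R) * a) = c * (m%:R * a) + c * u.+1%:R * a by ring.
rewrite h1. lra.
Qed.

Lemma G_mono1 m u : (0 < m)%N -> G m.+1 u <= G m u.+1.
Proof.
move=> hm /=.
have hg := G_le u (isT : (0 < m.+1)%N). have hi := inv_le hm.
have hp : 0 < (m + u.+1)%:R * a by apply: mulr_gt0 => //; rewrite ltr0n addn_gt0 hm.
rewrite ler_pdivlMr // natrD.
have hgc : G m.+1 u <= lams / (m%:R * a) by apply: le_trans hg hi.
have hma : 0 <= m%:R * a by apply: mulr_ge0; [apply: ler0n| exact: ltW].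
have h3 := ler_wpM2r hma hgc.
move: h3; rewrite (cK hm); set g := G m.+1 u => h3.
have -> : g * ((m%:R + u.+1%:R) * a) = g * (m%:R * a) + u.+1%:R * a * g by ring.
lra.
Qed.

Lemma G_mono2 m u : (0 < m)%N -> G m.+1 u <= G m u.
Proof.
elim: u m => [|u IH] m hm /=; first exact: inv_le.
have h1 := IH m.+1 isT.
have hp : 0 < (m + u.+1)%:R * a by apply: mulr_gt0 => //; rewrite ltr0n addn_gt0 hm.
have hp' : 0 < (m.+1 + u.+1)%:R * a by apply: mulr_gt0 => //; rewrite ltr0n addn_gt0.
apply: div_le => //.
  apply: addr_ge0; first exact: ltW.
  by apply: mulr_ge0; [apply: mulr_ge0; [apply: ler0n| exact: ltW]| apply: G_ge0].
  apply: lerD => //. apply: ler_wpM2l => //. by apply: mulr_ge0; [apply: ler0n| exact: ltW].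
apply: ler_wpM2r; first exact: ltW. by rewrite ler_nat addSn.
Qed.

Definition P (D : R) (t : nat) : R :=
  1 + \sum_(d2 < t) \prod_(d1 < d2.+1) ((t - d1)%:R / D).

Lemma PS D t : P D t.+1 = 1 + t.+1%:R / D * P D t.
Proof.
rewrite /P big_ord_recl big_ord1 subn0 mulrDr mulr1 big_distrr /=.
congr (_ + (_ + _)).
apply: eq_bigr => j _; rewrite /bump /= add1n big_ord_recl subn0; congr (_ * _).
Qed.

Lemma G_closed m t : (0 < m + t)%N ->
  G m t = lams / ((m + t)%:R * a) * P (m + t)%:R t.
Proof.
elim: t m => [|t IH] m hm /=.
  by rewrite addn0 /P big_ord0 addr0 mulr1.
rewrite (IH m.+1) // PS addSn -addnS.
have hp : ((m + t.+1)%:R : R) != 0 by rewrite pnatr_eq0 -lt0n.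
have : a != 0 by apply: lt0r_neq0.
move=> han. field. have -> : (m%:R + (1 + t%:R) : R) = (m + t.+1)%:R by rewrite -addn1 !natrD; ring.
by rewrite han hp.
Qed.

End G.

Section Net.
Variables (R : realFieldType) (n : nat) (lams lam : R) (e : rel 'I_n) (i : 'I_n).
Hypotheses (hn : (0 < n)%N) (hl : 0 < lams) (hlam : 0 < lam)
  (hsym : symmetric e) (hirr : irreflexive e).

Let a : R := lam / n%:R.
Let L0 := @unif_lam0 R n lam.
Let L := @unif_lam R n lam e.

Lemma ha : 0 < a.
Proof. by apply: divr_gt0 => //; rewrite ltr0n. Qed.

Definition uS (S : {set 'I_n}) := #|[set j | e i j & j \notin S]|.

Lemma L_ge0 j k : 0 <= L j k.
Proof. rewrite /L /unif_lam; case: (e j k) => //; exact: (ltW ha). Qed.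

Lemma rate_ge0 (S : {set 'I_n}) j : 0 <= rate_into L S j.
Proof. by apply: sumr_ge0 => k _; apply: L_ge0. Qed.

Lemma rate_ge_a (S : {set 'I_n}) j : i \in S -> e i j -> a <= rate_into L S j.
Proof.
move=> hi hij; rewrite /rate_into (bigD1 i) //=.
have -> : L j i = a by rewrite /L /unif_lam hsym hij.
rewrite lerDl; apply: sumr_ge0 => k _; exact: L_ge0.
Qed.

Lemma mem_nbrs (S : {set 'I_n}) j : i \in S -> e i j -> j \notin S -> j \in nbrs L S.
Proof.
move=> hi hij hj; rewrite inE hj /=.
by apply: lt_le_trans (rate_ge_a hi hij); apply: ha.
Qed.

Lemma uS_add (S : {set 'I_n}) j : j \notin S ->
  uS S = (e i j : nat) + uS (j |: S).
Proof.
move=> hj; rewrite /uS (cardsD1 j) inE hj andbT; congr (_ + _)%N.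
apply: eq_card => k; rewrite !inE; by case: (k =P j) => [->|] /=; rewrite ?andbF.
Qed.

Lemma card_add (S : {set 'I_n}) j : j \notin S -> #|j |: S| = #|S|.+1.
Proof. by move=> hj; rewrite cardsU1 hj. Qed.

Lemma card_pos (S : {set 'I_n}) : i \in S -> (0 < #|S|)%N.
Proof. by move=> hi; apply/card_gt0P; exists i. Qed.

Lemma sum_L0 (S : {set 'I_n}) : \sum_(j in S) L0 j = a *+ #|S|.
Proof. by rewrite /L0 /unif_lam0 sumr_const. Qed.

Lemma key m (S : {set 'I_n}) : i \in S -> Delta_fuel lams L0 L m S <= G lams a #|S| (uS S).
Proof.
elim: m S => [|m IH] S hi /=; first exact: (G_ge0 hl ha).
have hmS := card_pos hi.
set N := nbrs L S.
set F := G lams a #|S| (uS S).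
set g := G lams a #|S|.+1 (uS S).-1.
have hF0 : 0 <= F by apply: (G_ge0 hl ha).
have hxj : forall j, j \in N ->
   rate_into L S j * Delta_fuel lams L0 L m (j |: S)
   <= rate_into L S j * F + (if e i j then a * (g - F) else 0).
  move=> j; rewrite inE => /andP [hj _].
  have hx := IH (j |: S) (setU1r j hi).
  rewrite (card_add hj) in hx.
  have hr0 := rate_ge0 S j.
  have hu := uS_add hj.
  case hij: (e i j); rewrite hij /= in hu.
  - have hu' : uS S = (uS (j |: S)).+1 by rewrite hu.
    have hgF : g <= F by rewrite /g /F hu' /=; apply: (G_mono1 hl ha).
    have hxg : Delta_fuel lams L0 L m (j |: S) <= g by rewrite /g hu'.
    have hra := rate_ge_a hi hij.
    have h1 : 0 <= rate_into L S j * (g - Delta_fuel lams L0 L m (j |: S)).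
      by apply: mulr_ge0 => //; rewrite subr_ge0.
    have h2 : 0 <= (rate_into L S j - a) * (F - g).
      by apply: mulr_ge0; rewrite subr_ge0.
    nra.
  - have hgF : G lams a #|S|.+1 (uS (j |: S)) <= F.
      by rewrite /F hu ?add0n; apply: (G_mono2 hl ha).
    rewrite addr0; apply: ler_wpM2l => //; exact: le_trans hx hgF.
have hsum : \sum_(j in N) rate_into L S j * Delta_fuel lams L0 L m (j |: S)
    <= F * \sum_(j in N) rate_into L S j + (a * (g - F)) *+ uS S.
  apply: le_trans (ler_sum _ hxj) _.
  rewrite big_split /= -mulr_suml mulrC lerD2l.
  rewrite -big_mkcondr /= (eq_bigl (fun j => j \in [set j | e i j & j \notin S])) ?sumr_const //.
  move=> j; rewrite [in RHS]inE; case hij: (e i j); rewrite ?andbF ?andbT //=.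
  apply/idP/idP => [|hj]; first by rewrite inE => /andP[].
  exact: mem_nbrs.
have hR0 : 0 <= \sum_(j in N) rate_into L S j by apply: sumr_ge0 => j _; apply: rate_ge0.
have hmSa : 0 < a *+ #|S| by rewrite -[a *+ _]mulr_natl; apply: mulr_gt0; [rewrite ltr0n| exact: ha].
rewrite sum_L0 ler_pdivrMr; last by lra.
move: hsum; rewrite -[a *+ #|S|]mulr_natl -[_ *+ uS S]mulr_natl /F /g.
have hc := cK lams ha hmS.
move: hR0.
set X := \sum_(j in N) rate_into L S j * _.
set Y := \sum_(j in N) rate_into L S j.
move=> hR0.
case: (uS S) => [|u] /= hsum.
  rewrite (_ : (0%:R : R) = 0) // mul0r addr0 in hsum.
  move: hsum hc; set c := lams / _ => hsum hc.
  have -> : c * (#|S|%:R * a + Y) = c * (#|S|%:R * a) + c * Y by ring.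
  lra.
have hp : 0 < (#|S| + u.+1)%:R * a by apply: mulr_gt0; [rewrite ltr0n addn_gt0 hmS| exact: ha].
have hfe := divfK (lt0r_neq0 hp) (lams + u.+1%:R * a * G lams a #|S|.+1 u).
move: hsum hfe; set c := _ / _.
set gg := G _ _ _ _.
rewrite natrD => hsum hfe.
have -> : c * (#|S|%:R * a + Y) = c * ((#|S|%:R + u.+1%:R) * a) - u.+1%:R * a * c + c * Y by ring.
rewrite hfe.
have e1 : u.+1%:R * (a * (gg - c)) = u.+1%:R * a * gg - u.+1%:R * a * c by ring.
rewrite e1 in hsum.
lra.
Qed.

Section Eq.
Hypothesis hleaf : forall j, e i j -> degree e j = 1%N.

Lemma rate_star (S : {set 'I_n}) j : i \in S -> S \subset i |: [set k | e i k] ->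
  j \notin S -> rate_into L S j = if e i j then a else 0.
Proof.
move=> hi hsub hj; rewrite /rate_into (bigD1 i) //= big1 ?addr0.
  by rewrite /L /unif_lam hsym.
move=> k /andP [hkS hki]; rewrite /L /unif_lam.
case hjk: (e j k) => //; exfalso.
have := subsetP hsub k hkS; rewrite !inE (negbTE hki) /= => hik.
have hd := hleaf hik; rewrite /degree in hd.
have [x hx] := cards1P (introT eqP hd).
have hi' : i \in [set l | e k l] by rewrite inE hsym.
have hj' : j \in [set l | e k l] by rewrite inE hsym.
rewrite hx !inE in hi' hj'.
move: hj; rewrite (eqP hj') -(eqP hi') hi //.
Qed.

Lemma nm (x : R) k : x *+ k = k%:R * x.
Proof. by rewrite mulr_natl. Qed.

Lemma eqkey m (S : {set 'I_n}) : i \in S -> S \subset i |: [set k | e i k] ->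
  (uS S < m)%N -> Delta_fuel lams L0 L m S = G lams a #|S| (uS S).
Proof.
elim: m S => [|m IH] S hi hsub hu //=.
have hmS := card_pos hi.
have hN : nbrs L S = [set j | e i j & j \notin S].
  apply/setP => j; rewrite !inE; case hjS: (j \in S) => /=; first by rewrite andbF.
  rewrite (rate_star hi hsub (negbT hjS)); case: (e i j) => /=; [by rewrite ha | by rewrite ltxx].
rewrite hN.
rewrite (eq_bigr (fun _ => a * G lams a #|S|.+1 (uS S).-1)); last first.
  move=> j; rewrite inE => /andP [hij hj].
  rewrite (rate_star hi hsub hj) hij; congr (_ * _).
  have hu' := uS_add hj; rewrite hij /= in hu'.
  rewrite IH.
  - by rewrite (card_add hj) hu'.
  - exact: setU1r.
  - apply/subsetP => k; rewrite !inE => /orP [/eqP ->|hk]; first by rewrite hij orbT.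
    by move: (subsetP hsub k hk); rewrite !inE.
  - by move: hu; rewrite hu'.
rewrite sum_L0 sumr_const (eq_bigr (fun _ => a)); last first.
  by move=> j; rewrite inE => /andP [hij hj]; rewrite (rate_star hi hsub hj) hij.
rewrite sumr_const -/(uS S).
case: (uS S) => [|u] /=.
  by rewrite !mulr0n !addr0 (nm a #|S|).
rewrite (nm a #|S|) (nm a u.+1) (nm (a * _) u.+1) natrD.
congr (_ / _); ring.
Qed.

End Eq.

End Net.



Theorem mainTheorem9 (R : realFieldType) (n : nat) (lams lam : R)
    (e : rel 'I_n) (i : 'I_n) (d : nat) :
  (2 <= n)%N -> 0 < lams -> 0 < lam ->
  symmetric e -> irreflexive e ->
  (1 <= d <= n.-1)%N -> degree e i = d ->
  let bound := lams / lam * (n%:R / (d.+1)%:R) *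
      (1 + \sum_(d2 < d) \prod_(d1 < d2.+1) ((d - d1)%:R / (d.+1)%:R)) in
  Delta_node lams (@unif_lam0 R n lam) (@unif_lam R n lam e) i <= bound /\
  ((forall j, e i j -> degree e j = 1%N) ->
   Delta_node lams (@unif_lam0 R n lam) (@unif_lam R n lam e) i = bound).
Proof.
move=> hn2 hl hlam hsym hirr /andP [hd1 hdn] hdeg bound.
have hn : (0 < n)%N by apply: leq_trans hn2.
have hu : uS e i [set i] = d.
  rewrite /uS -hdeg /degree; apply: eq_card => j; rewrite !inE.
  apply/andP/idP => [[]//|h]; split => //; apply/negP => /eqP hj; by move: h; rewrite hj hirr.
have ha' := ha hn hlam.
have hG : G lams (lam / n%:R) 1 d = bound.
  rewrite (G_closed lams ha' (isT : (0 < 1 + d)%N)) /bound add1n /P.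
  congr (_ * _).
  have : (n%:R : R) != 0 by rewrite pnatr_eq0 -lt0n.
  have : ((d.+1)%:R : R) != 0 by rewrite pnatr_eq0.
  have : lam != 0 by apply: lt0r_neq0.
  move=> h1 h2 h3; field.
  rewrite -natr1 addrC in h2; by rewrite h1 h2 h3.
rewrite /Delta_node /DeltaS cards1.
split.
  have := key hn hl hlam hsym (n - 1).+1 (set11 i).
  by rewrite cards1 hu hG.
move=> hleaf.
rewrite (eqkey lams hn hlam hsym hleaf (set11 i)).
- by rewrite cards1 hu hG.
- exact: subsetUl.
- by rewrite hu ltnS subn1.
Qed.
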